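(* Fix $\epsilon_2>0$ and $(u_\pm,v_\pm)$ with $v_\pm>0$ and $u_->u_++2\epsilon_2$, and for small $\epsilon_1>0$ let $v_*^{\epsilon_2}$, $\sigma_1^{\epsilon_2},\sigma_2^{\epsilon_2}$ be the intermediate density and shock speeds of the two-shock Riemann solution. Then $$\lim_{\epsilon_1\to0}\int_{\sigma_1^{\epsilon_2}}^{\sigma_2^{\epsilon_2}}v_*^{\epsilon_2}\,d\xi=\tfrac12\big(v_+(u_--u_++2\epsilon_2)-v_-(u_+-u_-+2\epsilon_2)\big).$$
   Context: Perturbed Brio system: $u_t+(\tfrac12u^2+\tfrac12\epsilon_1v^2)_x=0$, $v_t+(uv-\epsilon_2v)_x=0$, $\epsilon_1,\epsilon_2>0$, $v>0$. The two-shock intermediate state $(u_*,v_* )$ satisfies $v_*>\max(v_-,v_+)$, $u_+<u_*<u_-$, $$u_*=u_-+(v_*-v_-)\frac{\epsilon_2-\sqrt{\epsilon_2^2+4\epsilon_1(v_*+v_-)^2}}{v_*+v_-},\qquad u_+=u_*+(v_+-v_* )\frac{\epsilon_2+\sqrt{\epsilon_2^2+4\epsilon_1(v_*+v_+)^2}}{v_*+v_+},$$ with shock speeds $\sigma_1=u_-+\frac{v_*(u_*-u_-)}{v_*-v_-}-\epsilon_2$, $\sigma_2=u_++\frac{v_*(u_+-u_* )}{v_+-v_*}-\epsilon_2$. *)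

(* Defs.v *)
From Stdlib Require Import Reals Lra.
Open Scope R_scope.

(* Two-shock intermediate state (u_*, v_* ) of the perturbed Brio system
   for parameters eps1, eps2 and Riemann data (um,vm) = (u_-,v_-),
   (up,vp) = (u_+,v_+). *)
Definition two_shock_state (eps1 eps2 um vm up vp us vs : R) : Prop :=
  vs > Rmax vm vp /\ up < us < um /\
  us = um + (vs - vm) * (eps2 - sqrt (eps2 ^ 2 + 4 * eps1 * (vs + vm) ^ 2)) / (vs + vm) /\
  up = us + (vp - vs) * (eps2 + sqrt (eps2 ^ 2 + 4 * eps1 * (vs + vp) ^ 2)) / (vs + vp).

Definition sigma1 (eps2 um vm us vs : R) : R :=
  um + vs * (us - um) / (vs - vm) - eps2.
Definition sigma2 (eps2 up vp us vs : R) : R :=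
  up + vs * (up - us) / (vp - vs) - eps2.

(* Main.v *)
Require Import Defs.
From Stdlib Require Import Reals Lra Psatz.
Open Scope R_scope.

Lemma sq_le (c a : R) : 0 <= a -> 0 <= c -> c * c <= a * a -> c <= a.
Proof. intros. destruct (Rlt_or_le a c); [|lra]. nra. Qed.

Lemma key (e eps2 um vm up vp y x : R)
  (He : 0 < e) (Heps2 : 0 < eps2) (Hvm : 0 < vm) (Hvp : 0 < vp)
  (Hu : um > up + 2 * eps2)
  (H : two_shock_state e eps2 um vm up vp y x) :
  Rabs (x * (sigma2 eps2 up vp y x - sigma1 eps2 um vm y x)
        - (vp * (um - up + 2 * eps2) - vm * (up - um + 2 * eps2)) / 2)
  <= ((vp - vm)^2 + vm * vp * (4 + 4 * eps2 * (2 + vm / vp) / (um - up - 2 * eps2)))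
     * sqrt e.
Proof.
  destruct H as [Hx [[H1 H2] [Hy Hup]]].
  assert (Hxm : x > vm) by (pose proof (Rmax_l vm vp); lra).
  assert (Hxp : x > vp) by (pose proof (Rmax_r vm vp); lra).
  set (s := sqrt e) in *.
  assert (Hs : 0 < s) by (apply sqrt_lt_R0; lra).
  assert (Hss : s * s = e) by (apply sqrt_sqrt; lra).
  set (a := sqrt (eps2 ^ 2 + 4 * e * (x + vm) ^ 2)) in *.
  set (b := sqrt (eps2 ^ 2 + 4 * e * (x + vp) ^ 2)) in *.
  assert (Ha0 : 0 <= a) by apply sqrt_pos.
  assert (Hb0 : 0 <= b) by apply sqrt_pos.
  assert (Ha2 : a * a = eps2 ^ 2 + 4 * e * (x + vm) ^ 2).
  { apply sqrt_sqrt. assert (0 <= (x+vm)^2) by apply pow2_ge_0.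
    assert (0 <= eps2^2) by apply pow2_ge_0. nra. }
  assert (Hb2 : b * b = eps2 ^ 2 + 4 * e * (x + vp) ^ 2).
  { apply sqrt_sqrt. assert (0 <= (x+vp)^2) by apply pow2_ge_0.
    assert (0 <= eps2^2) by apply pow2_ge_0. nra. }
  assert (Ha1 : a >= 2 * s * (x + vm)).
  { assert (Q : (2 * s * (x + vm)) * (2 * s * (x + vm)) <= a * a).
    { replace ((2 * s * (x + vm)) * (2 * s * (x + vm))) with (4 * (s * s) * (x + vm) ^ 2) by ring.
      rewrite Hss. assert (0 <= eps2^2) by apply pow2_ge_0. lra. }
    destruct (Rlt_or_le a (2 * s * (x + vm))); [|lra].
    assert (0 <= 2 * s * (x + vm)) by nra. nra. }
  assert (Hb1 : b >= 2 * s * (x + vp)).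
  { assert (Q : (2 * s * (x + vp)) * (2 * s * (x + vp)) <= b * b).
    { replace ((2 * s * (x + vp)) * (2 * s * (x + vp))) with (4 * (s * s) * (x + vp) ^ 2) by ring.
      rewrite Hss. assert (0 <= eps2^2) by apply pow2_ge_0. lra. }
    destruct (Rlt_or_le b (2 * s * (x + vp))); [|lra].
    assert (0 <= 2 * s * (x + vp)) by nra. nra. }
  assert (Ha3 : a >= eps2).
  { apply Rle_ge, sq_le; try lra. rewrite Ha2.
    assert (0 <= (x+vm)^2) by apply pow2_ge_0. nra. }
  assert (Ha4 : a <= eps2 + 2 * s * (x + vm)).
  { apply sq_le; try nra. rewrite Ha2.
    replace ((eps2 + 2 * s * (x + vm)) * (eps2 + 2 * s * (x + vm))) with
      (eps2^2 + 4 * eps2 * s * (x + vm) + 4 * (s * s) * (x + vm)^2) by ring.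
    rewrite Hss. assert (0 <= eps2 * s * (x + vm)).
    { apply Rmult_le_pos; nra. } lra. }
  assert (Hb3 : b >= eps2).
  { apply Rle_ge, sq_le; try lra. rewrite Hb2.
    assert (0 <= (x+vp)^2) by apply pow2_ge_0. nra. }
  assert (Hb4 : b <= eps2 + 2 * s * (x + vp)).
  { apply sq_le; try nra. rewrite Hb2.
    replace ((eps2 + 2 * s * (x + vp)) * (eps2 + 2 * s * (x + vp))) with
      (eps2^2 + 4 * eps2 * s * (x + vp) + 4 * (s * s) * (x + vp)^2) by ring.
    rewrite Hss. assert (0 <= eps2 * s * (x + vp)).
    { apply Rmult_le_pos; nra. } lra. }
  set (A := (a - eps2) / (x + vm)).
  set (B := (eps2 + b) / (x + vp)).
  assert (HA : A * (x + vm) = a - eps2) by (unfold A; field; lra).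
  assert (HB : B * (x + vp) = eps2 + b) by (unfold B; field; lra).
  assert (HA0 : 0 <= A) by nra.
  assert (HB0 : 0 <= B) by nra.
  assert (HA1 : A <= 2 * s) by nra.
  assert (Hy' : y = um - (x - vm) * A).
  { rewrite Hy. unfold A. field. lra. }
  assert (Hup' : up = y + (vp - x) * B).
  { rewrite Hup at 1. unfold B. field. lra. }
  assert (Hs1 : sigma1 eps2 um vm y x = um - x * A - eps2).
  { unfold sigma1. rewrite Hy'. field. lra. }
  assert (Hs2 : sigma2 eps2 up vp y x = up + x * B - eps2).
  { unfold sigma2. rewrite Hup'. field. lra. }
  rewrite Hs1, Hs2.
  assert (HQ : x * (up + x * B - eps2 - (um - x * A - eps2))
        - (vp * (um - up + 2 * eps2) - vm * (up - um + 2 * eps2)) / 2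
        = (vm - vp) * (a - b) / 2 + vm * vp * (A + B)).
  { assert (Ea : a = A * (x + vm) + eps2) by lra.
    assert (Eb : b = B * (x + vp) - eps2) by lra.
    rewrite Ea, Eb, Hup', Hy'. field. }
  rewrite HQ.
  set (W := 2 * x + vm + vp).
  assert (HW : 0 < W) by (unfold W; lra).
  assert (Hab : (a - b) * (a + b) = 4 * e * (vm - vp) * W).
  { unfold W. nra. }
  assert (Hab1 : a + b >= 2 * s * W) by (unfold W; lra).
  assert (Hc1 : (vm - vp) * (a - b) * (a + b) = 4 * e * (vm - vp) ^ 2 * W).
  { rewrite Rmult_assoc, Hab. ring. }
  assert (Hc2 : 0 <= (vm - vp) * (a - b)).
  { assert (0 < a + b) by nra.
    assert (0 <= 4 * e * (vm - vp) ^ 2 * W).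
    { apply Rmult_le_pos; [|lra]. apply Rmult_le_pos; [lra|apply pow2_ge_0]. }
    destruct (Rlt_or_le ((vm - vp) * (a - b)) 0); [|lra].
    assert ((vm - vp) * (a - b) * (a + b) < 0) by (apply Rmult_neg_pos; lra). lra. }
  assert (Hc3 : (vm - vp) * (a - b) <= 2 * s * (vm - vp) ^ 2).
  { assert (0 <= (vm - vp) ^ 2) by apply pow2_ge_0.
    assert (Hk : (vm - vp) * (a - b) * (2 * s * W) <= 2 * s * (vm - vp) ^ 2 * (2 * s * W)).
    { apply Rle_trans with ((vm - vp) * (a - b) * (a + b)).
      - apply Rmult_le_compat_l; lra.
      - rewrite Hc1, <- Hss. right. ring. }
    apply Rmult_le_reg_r with (2 * s * W). apply Rmult_lt_0_compat; lra. lra. }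
  set (g := um - up - 2 * eps2).
  set (K := 2 + vm / vp).
  assert (Hg : 0 < g) by (unfold g; lra).
  assert (HK : W <= K * (x + vp)).
  { unfold K, W. assert (0 <= vm / vp * x).
    { apply Rmult_le_pos; [|lra]. apply Rlt_le, Rdiv_lt_0_compat; lra. }
    assert (vm / vp * vp = vm) by (field; lra). nra. }
  assert (Hd : um - up <= a + b).
  { rewrite Hup', Hy'. nra. }
  assert (HgK : g <= 2 * s * K * (x + vp)).
  { assert (2 * s * W <= 2 * s * (K * (x + vp))) by (apply Rmult_le_compat_l; lra).
    unfold g, W in *. lra. }
  assert (HK0 : 0 < K).
  { unfold K. assert (0 < vm / vp) by (apply Rdiv_lt_0_compat; lra). lra. }
  assert (Hr : 1 <= 2 * s * K * (x + vp) / g).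
  { apply (Rmult_le_reg_r g); [lra|]. unfold Rdiv. rewrite Rmult_assoc, Rinv_l; lra. }
  assert (HB1 : B <= 2 * s + 4 * eps2 * s * K / g).
  { apply (Rmult_le_reg_r (x + vp)); [lra|]. rewrite HB.
    assert (E : (2 * s + 4 * eps2 * s * K / g) * (x + vp)
                = 2 * s * (x + vp) + 2 * eps2 * (2 * s * K * (x + vp) / g))
      by (field; lra).
    rewrite E. nra. }
  fold g. fold K.
  assert (Hvv : 0 < vm * vp) by nra.
  apply Rabs_le. split.
  - assert (0 <= vm * vp * (A + B)) by nra.
    assert (0 <= vm * vp * (4 + 4 * eps2 * K / g) * s).
    { apply Rmult_le_pos; [|lra]. apply Rmult_le_pos; [lra|].
      assert (0 <= 4 * eps2 * K / g).
      { apply Rmult_le_pos; [|apply Rlt_le, Rinv_0_lt_compat; lra]. nra. }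
      lra. }
    nra.
  - assert (E2 : 4 * eps2 * K / g * s = 4 * eps2 * s * K / g) by (field; lra).
    assert (vm * vp * (A + B) <= vm * vp * ((4 + 4 * eps2 * K / g) * s)).
    { apply Rmult_le_compat_l; [lra|]. rewrite Rmult_plus_distr_r, E2. lra. }
    nra.
Qed.

Theorem lemma6p4 (eps2 um vm up vp : R)
  (Heps2 : 0 < eps2) (Hvm : 0 < vm) (Hvp : 0 < vp)
  (Hu : um > up + 2 * eps2)
  (delta : R) (Hdelta : 0 < delta) (us vs : R -> R)
  (Hsol : forall e1, 0 < e1 < delta ->
     two_shock_state e1 eps2 um vm up vp (us e1) (vs e1)) :
  limit1_in
    (fun e1 => vs e1 * (sigma2 eps2 up vp (us e1) (vs e1)
                        - sigma1 eps2 um vm (us e1) (vs e1)))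
    (fun e1 => 0 < e1 < delta)
    ((vp * (um - up + 2 * eps2) - vm * (up - um + 2 * eps2)) / 2)
    0.
Proof.
  set (C := (vp - vm)^2 + vm * vp * (4 + 4 * eps2 * (2 + vm / vp) / (um - up - 2 * eps2))).
  assert (HC : 0 <= C).
  { unfold C. assert (0 <= (vp - vm)^2) by apply pow2_ge_0.
    assert (0 < vm / vp) by (apply Rdiv_lt_0_compat; lra).
    assert (0 <= 4 * eps2 * (2 + vm / vp) / (um - up - 2 * eps2)).
    { apply Rmult_le_pos; [|apply Rlt_le, Rinv_0_lt_compat; lra].
      apply Rmult_le_pos; lra. }
    assert (0 <= vm * vp) by nra. nra. }
  intros eps Heps.
  set (r := eps / (C + 1)).
  assert (Hr : 0 < r) by (unfold r; apply Rdiv_lt_0_compat; lra).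
  exists (Rmin delta (r * r)). split.
  { apply Rmin_pos; nra. }
  intros e [[He1 He2] Hd]. simpl in *. unfold R_dist in *.
  rewrite Rminus_0_r, Rabs_pos_eq in Hd by lra.
  assert (He3 : e < r * r) by (pose proof (Rmin_r delta (r * r)); lra).
  pose proof (key e eps2 um vm up vp (us e) (vs e) He1 Heps2 Hvm Hvp Hu
    (Hsol e (conj He1 He2))) as K.
  fold C in K.
  assert (Hs : sqrt e < r).
  { rewrite <- (sqrt_square r) by lra. apply sqrt_lt_1; nra. }
  assert (Hs0 : 0 <= sqrt e) by apply sqrt_pos.
  assert (C * sqrt e <= C * r) by (apply Rmult_le_compat_l; lra).
  assert (Hcr : C * r + r = eps) by (unfold r; field; lra).
  change (Rabs (vs e * (sigma2 eps2 up vp (us e) (vs e) - sigma1 eps2 um vm (us e) (vs e)) -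
       (vp * (um - up + 2 * eps2) - vm * (up - um + 2 * eps2)) / 2) <= C * sqrt e) in K.
  lra.
Qed.
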